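(* For integers $m\ge2$ let $$P(m)=\frac{m}{\sqrt\pi}\int_{-\infty}^{\infty}e^{-t^2}\bigl(1-\Phi(t)\bigr)^{m-1}\,dt.$$ Then $P(m)\le \dfrac{2\pi\sqrt2}{\sqrt{2m+1}}$ for all $m\ge 2$; in particular $P(m)\to0$ as $m\to\infty$.
   Context: $\Phi$ is the standard normal cumulative distribution function. $P(m)$ is the limit as the number of voters tends to infinity of the probability that a Condorcet winner exists among $m$ candidates under the impartial culture (each voter independently picks one of the $m!$ strict rankings uniformly at random). *)

(* Defs.v *)
From Stdlib Require Import Reals.
From Coquelicot Require Import Coquelicot.
Open Scope R_scope.

Definition Phi (t : R) : R :=
  / sqrt (2 * PI) *
  RInt_gen (fun x => exp (- x ^ 2 / 2)) (Rbar_locally m_infty) (at_point t).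

Definition P (m : nat) : R :=
  INR m / sqrt PI *
  RInt_gen (fun t => exp (- t ^ 2) * (1 - Phi t) ^ (m - 1))
           (Rbar_locally m_infty) (Rbar_locally p_infty).

(* Main.v *)
Require Import Defs.
From Stdlib Require Import Reals Lra Lia Classical.
From Coquelicot Require Import Coquelicot.
Open Scope R_scope.

Lemma nondecr_deriv (D dD : R -> R) a b : a <= b ->
  (forall x, a <= x <= b -> is_derive D x (dD x)) ->
  (forall x, a <= x <= b -> 0 <= dD x) -> D a <= D b.
Proof.
  intros Hab Hd Hp.
  destruct (MVT_gen D a b dD) as [c [Hc Heq]].
  - rewrite Rmin_left, Rmax_right by lra. intros x Hx; apply Hd; lra.
  - rewrite Rmin_left, Rmax_right by lra. intros x Hx.
    apply continuity_pt_filterlim. apply (ex_derive_continuous (K:=R_AbsRing) (V:=R_NormedModule)).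
    eexists; apply Hd; lra.
  - rewrite Rmin_left, Rmax_right in Hc by lra.
    assert (0 <= dD c * (b - a)) by (apply Rmult_le_pos; [apply Hp; lra| lra]).
    lra.
Qed.

Lemma deriv_RInt_var (f : R -> R) a t : (forall x, continuous f x) ->
  is_derive (fun x => RInt f a x) t (f t).
Proof.
  intros Hc. apply (is_derive_RInt f (fun x => RInt f a x) a t).
  - apply filter_forall. intros y. apply (RInt_correct (V:=R_CompleteNormedModule)).
    apply (ex_RInt_continuous (V:=R_CompleteNormedModule)). intros; apply Hc.
  - apply Hc.
Qed.

Lemma RInt_le_anti (f H h : R -> R) a b : a <= b -> (forall x, continuous f x) ->
  (forall x, a <= x <= b -> is_derive H x (h x)) ->
  (forall x, a <= x <= b -> f x <= h x) -> RInt f a b <= H b - H a.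
Proof.
  intros Hab Hc Hd Hle.
  assert (K := nondecr_deriv (fun x => H x - RInt f a x) (fun x => h x - f x) a b Hab).
  simpl in K. rewrite RInt_point in K.
  assert (H b - RInt f a b >= H a - zero) by (apply Rle_ge, K;
   [intros x Hx; apply (is_derive_minus H (fun x => RInt f a x));
     [apply Hd; auto | apply deriv_RInt_var; auto]
   | intros x Hx; specialize (Hle x Hx); lra]).
  unfold zero in *; simpl in *. lra.
Qed.

Lemma RInt_ge_anti (f H h : R -> R) a b : a <= b -> (forall x, continuous f x) ->
  (forall x, a <= x <= b -> is_derive H x (h x)) ->
  (forall x, a <= x <= b -> h x <= f x) -> H b - H a <= RInt f a b.
Proof.
  intros Hab Hc Hd Hle.
  assert (K := nondecr_deriv (fun x => RInt f a x - H x) (fun x => f x - h x) a b Hab).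
  simpl in K. rewrite RInt_point in K.
  assert (RInt f a b - H b >= zero - H a) by (apply Rle_ge, K;
   [intros x Hx; apply (is_derive_minus (fun x => RInt f a x) H);
     [apply deriv_RInt_var; auto | apply Hd; auto]
   | intros x Hx; specialize (Hle x Hx); lra]).
  unfold zero in *; simpl in *. lra.
Qed.

Lemma ball_R (x y eps : R) : ball x eps y <-> Rabs (y - x) < eps.
Proof. reflexivity. Qed.

Lemma is_RInt_gen_bound (f : R -> R) Fa Fb l lo hi :
  ProperFilter Fa -> ProperFilter Fb ->
  is_RInt_gen f Fa Fb l ->
  filter_prod Fa Fb (fun ab => forall y, is_RInt f (fst ab) (snd ab) y -> lo <= y <= hi) ->
  lo <= l <= hi.
Proof.
  intros PFa PFb Hl Hev. pose proof (@filter_prod_proper _ _ Fa Fb PFa PFb) as PF.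
  split; apply Rnot_lt_le; intro Hc.
  - assert (He : 0 < lo - l) by lra.
    assert (Hloc : locally l (fun y => y < lo)).
    { exists (mkposreal _ He). intros y Hy. apply ball_R in Hy. simpl in Hy.
      apply Rabs_lt_between in Hy. unfold minus, plus, opp in Hy; simpl in Hy. lra. }
    specialize (Hl _ Hloc). unfold filtermapi in Hl.
    assert (Hb := @filter_and _ _ (@filter_filter _ _ PF) _ _ Hl Hev).
    destruct (filter_ex _ Hb) as [ab [[y [Hy1 Hy2]] Hy3]].
    specialize (Hy3 y Hy1). lra.
  - assert (He : 0 < l - hi) by lra.
    assert (Hloc : locally l (fun y => hi < y)).
    { exists (mkposreal _ He). intros y Hy. apply ball_R in Hy. simpl in Hy.
      apply Rabs_lt_between in Hy. unfold minus, plus, opp in Hy; simpl in Hy. lra. }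
    specialize (Hl _ Hloc). unfold filtermapi in Hl.
    assert (Hb := @filter_and _ _ (@filter_filter _ _ PF) _ _ Hl Hev).
    destruct (filter_ex _ Hb) as [ab [[y [Hy1 Hy2]] Hy3]].
    specialize (Hy3 y Hy1). lra.
Qed.

Lemma exRI (g : R -> R) a b : (forall x, continuous g x) -> ex_RInt g a b.
Proof. intros Hc. apply (ex_RInt_continuous (V:=R_CompleteNormedModule)). intros; apply Hc. Qed.

Lemma RInt_mono_int (g : R -> R) a a0 b0 b : (forall x, continuous g x) ->
  (forall x, 0 <= g x) -> a <= a0 -> a0 <= b0 -> b0 <= b ->
  RInt g a0 b0 <= RInt g a b.
Proof.
  intros Hc Hp H1 H2 H3.
  rewrite <- (RInt_Chasles g a a0 b) by (apply exRI; auto).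
  rewrite <- (RInt_Chasles g a0 b0 b) by (apply exRI; auto).
  assert (0 <= RInt g a a0) by (apply RInt_ge_0; auto; apply exRI; auto).
  assert (0 <= RInt g b0 b) by (apply RInt_ge_0; auto; apply exRI; auto).
  unfold plus; simpl. lra.
Qed.

Lemma ex_gen2 (g : R -> R) M : (forall x, continuous g x) -> (forall x, 0 <= g x) ->
  (forall a b, a <= b -> RInt g a b <= M) ->
  exists l, is_RInt_gen g (Rbar_locally m_infty) (Rbar_locally p_infty) l.
Proof.
  intros Hc Hp HM.
  set (E := fun y => exists a b, a <= b /\ y = RInt g a b).
  destruct (completeness E) as [S [Hub Hlub]].
  - exists M. intros y [a [b [Hab ->]]]. auto.
  - exists (RInt g 0 0). exists 0, 0. split; auto; lra.
  - exists S. intros P [eps HP].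
    assert (Hex : exists a0 b0, a0 <= b0 /\ S - eps < RInt g a0 b0).
    { apply NNPP. intro Hn.
      assert (S <= S - eps).
      { apply Hlub. intros y [a [b [Hab ->]]].
        apply Rnot_lt_le. intro Hlt. apply Hn. exists a, b. auto. }
      destruct eps; simpl in *; lra. }
    destruct Hex as [a0 [b0 [Hab0 Hlt]]].
    apply (Filter_prod _ _ _ (fun a => a < a0) (fun b => b0 < b)).
    + exists a0. auto.
    + exists b0. auto.
    + intros a b Ha Hb. exists (RInt g a b). split.
      * apply (RInt_correct (V:=R_CompleteNormedModule)). apply exRI; auto.
      * apply HP. apply ball_R.
        assert (RInt g a b <= S) by (apply Hub; exists a, b; split; auto; lra).
        assert (RInt g a0 b0 <= RInt g a b) by (apply RInt_mono_int; auto; lra).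
        apply Rabs_lt_between. lra.
Qed.

Lemma ex_gen1 (g : R -> R) M t : (forall x, continuous g x) -> (forall x, 0 <= g x) ->
  (forall a, a <= t -> RInt g a t <= M) ->
  exists l, is_RInt_gen g (Rbar_locally m_infty) (at_point t) l.
Proof.
  intros Hc Hp HM.
  set (E := fun y => exists a, a <= t /\ y = RInt g a t).
  destruct (completeness E) as [S [Hub Hlub]].
  - exists M. intros y [a [Hab ->]]. auto.
  - exists (RInt g t t). exists t. split; auto; lra.
  - exists S. intros P [eps HP].
    assert (Hex : exists a0, a0 <= t /\ S - eps < RInt g a0 t).
    { apply NNPP. intro Hn.
      assert (S <= S - eps).
      { apply Hlub. intros y [a [Hab ->]].
        apply Rnot_lt_le. intro Hlt. apply Hn. exists a. auto. }
      destruct eps; simpl in *; lra. }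
    destruct Hex as [a0 [Hab0 Hlt]].
    apply (Filter_prod _ _ _ (fun a => a < a0) (fun b => b = t)).
    + exists a0. auto.
    + reflexivity.
    + intros a b Ha Hb. subst b. exists (RInt g a t). split.
      * apply (RInt_correct (V:=R_CompleteNormedModule)). apply exRI; auto.
      * apply HP. apply ball_R.
        assert (RInt g a t <= S) by (apply Hub; exists a; split; auto; lra).
        assert (RInt g a0 t <= RInt g a t) by (apply RInt_mono_int; auto; lra).
        apply Rabs_lt_between. lra.
Qed.

Definition g (x : R) := exp (- x ^ 2 / 2).
Definition G (t : R) := RInt_gen g (Rbar_locally m_infty) (at_point t).
Definition L0 := sqrt 2 * PI.

Lemma g_cont x : continuous g x.
Proof. apply (ex_derive_continuous (K:=R_AbsRing) (V:=R_NormedModule)). unfold g. auto_derive. auto. Qed.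

Lemma g_pos x : 0 < g x.
Proof. apply exp_pos. Qed.

Lemma g_le x : g x <= / (1 + x ^ 2 / 2).
Proof.
  unfold g. replace (- x ^ 2 / 2) with (- (x ^ 2 / 2)) by field.
  rewrite exp_Ropp. assert (H := exp_ineq1_le (x ^ 2 / 2)).
  assert (0 <= x ^ 2) by (apply pow2_ge_0).
  apply Rinv_le_contravar; lra.
Qed.

Lemma sqrt2_pos : 0 < sqrt 2.
Proof. apply sqrt_lt_R0; lra. Qed.

Lemma RInt_g_le a b : a <= b -> RInt g a b <= L0.
Proof.
  intros Hab.
  assert (K := RInt_le_anti g (fun x => sqrt 2 * atan (x / sqrt 2)) (fun x => / (1 + x ^ 2 / 2)) a b Hab g_cont).
  assert (Hs := sqrt2_pos).
  assert (Hs2 : sqrt 2 * sqrt 2 = 2) by (apply sqrt_sqrt; lra).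
  assert (RInt g a b <= sqrt 2 * atan (b / sqrt 2) - sqrt 2 * atan (a / sqrt 2)).
  { apply K.
    - intros x _. auto_derive; auto.
      replace (x * / sqrt 2 * (x * / sqrt 2 * 1)) with (x ^ 2 / (sqrt 2 * sqrt 2)) by (field; lra).
      rewrite Hs2. field. split; [nra|lra].
    - intros x _. apply g_le. }
  destruct (atan_bound (b / sqrt 2)). destruct (atan_bound (a / sqrt 2)).
  unfold L0. nra.
Qed.

Lemma G_is t : is_RInt_gen g (Rbar_locally m_infty) (at_point t) (G t).
Proof.
  destruct (ex_gen1 g L0 t g_cont (fun x => Rlt_le _ _ (g_pos x))) as [l Hl].
  - intros a Ha. apply RInt_g_le; auto.
  - unfold G. rewrite (is_RInt_gen_unique g l Hl). exact Hl.
Qed.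

Lemma G_bound t : 0 <= G t <= L0.
Proof.
  apply (is_RInt_gen_bound g (Rbar_locally m_infty) (at_point t)); try exact _.
  - apply G_is.
  - apply (Filter_prod _ _ _ (fun a => a < t) (fun b => b = t)).
    + exists t. auto.
    + reflexivity.
    + intros a b Ha Hb y Hy. simpl in Hy. subst b.
      rewrite <- (is_RInt_unique _ _ _ _ Hy). split.
      * apply RInt_ge_0; [lra| apply exRI, g_cont | intros; apply Rlt_le, g_pos].
      * apply RInt_g_le; lra.
Qed.

Lemma G_eq t : G t = G 0 + RInt g 0 t.
Proof.
  assert (H := is_RInt_gen_Chasles g 0 (G 0) (RInt g 0 t) (G_is 0)
    (proj2 (is_RInt_gen_at_point g 0 t (RInt g 0 t))
      (RInt_correct (V:=R_CompleteNormedModule) _ _ _ (exRI g 0 t g_cont)))).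
  unfold G at 1. rewrite (is_RInt_gen_unique _ _ H). reflexivity.
Qed.

Lemma G_deriv t : is_derive G t (g t).
Proof.
  apply (is_derive_ext (fun x => G 0 + RInt g 0 x)).
  - intros x. symmetry. apply G_eq.
  - replace (g t) with (0 + g t) by ring.
    apply (is_derive_plus (fun _ => G 0)). apply (is_derive_const (K:=R_AbsRing) (V:=R_NormedModule)).
    apply deriv_RInt_var. apply g_cont.
Qed.

Definition c := / sqrt (2 * PI).
Definition u (t : R) := 1 - c * G t.

Lemma Phi_u t : 1 - Phi t = u t.
Proof. reflexivity. Qed.

Lemma sqrtPI_facts : sqrt PI * sqrt PI = PI /\ 3 < PI /\ PI <= 4 /\ 0 < sqrt PI.
Proof.
  assert (H := PI2_3_2). assert (H2 := PI_4).
  split; [apply sqrt_sqrt; lra|]. split; [lra|]. split; [lra|].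
  apply sqrt_lt_R0; lra.
Qed.

Lemma sqrt2_facts : sqrt 2 * sqrt 2 = 2 /\ 0 < sqrt 2.
Proof. split; [apply sqrt_sqrt; lra| apply sqrt_lt_R0; lra]. Qed.

Lemma c_eq : c = / (sqrt 2 * sqrt PI).
Proof. unfold c. rewrite sqrt_mult; auto; [lra| left; apply PI_RGT_0]. Qed.

Lemma c_pos : 0 < c.
Proof. rewrite c_eq. destruct sqrtPI_facts as [? [? [? ?]]]. destruct sqrt2_facts.
  apply Rinv_0_lt_compat. nra. Qed.

Lemma cL0 : c * L0 <= 2.
Proof.
  rewrite c_eq. unfold L0. destruct sqrtPI_facts as [H1 [H2 [H3 H4]]]. destruct sqrt2_facts as [H5 H6].
  set (x := sqrt PI) in *. set (s := sqrt 2) in *.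
  replace (/ (s * x) * (s * PI)) with x.
  - nra.
  - rewrite <- H1. field. split; lra.
Qed.

Lemma u_abs t : Rabs (u t) <= 1.
Proof.
  unfold u. destruct (G_bound t). assert (Hc := c_pos). assert (H2 := cL0).
  apply Rabs_le. split; nra.
Qed.

Lemma pow_abs_le1 x n : Rabs x <= 1 -> Rabs (x ^ n) <= 1.
Proof.
  intros H. rewrite <- RPow_abs. replace 1 with (1 ^ n) by apply pow1.
  apply pow_incr. split; auto. apply Rabs_pos.
Qed.

Lemma u_deriv t : is_derive u t (- c * g t).
Proof.
  unfold u. apply (is_derive_ext (fun x => 1 - c * G x)); [reflexivity|].
  replace (- c * g t) with (0 - c * g t) by ring.
  apply (is_derive_minus (fun _ => 1)). apply (is_derive_const (K:=R_AbsRing) (V:=R_NormedModule)).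
  apply (is_derive_scal G t c (g t)). apply G_deriv.
Qed.

Lemma g_deriv t : is_derive g t (- t * g t).
Proof. unfold g. auto_derive; auto. replace (- (t * (t * 1)) * / 2) with (- t ^ 2 / 2) by field. field. Qed.

Lemma u_cont t : continuous u t.
Proof. apply (ex_derive_continuous (K:=R_AbsRing) (V:=R_NormedModule)). eexists; apply u_deriv. Qed.

Definition fI n t := exp (- t ^ 2) * u t ^ n.
Definition W1 t := - t * g t + G t.
Definition Qpm (s : R) n lam t :=
  - / (INR (S n) * c) * g t * u t ^ (S n) +
  s * (/ (INR (S n) * c) * / 2 * (lam * W1 t +
       (- ((u t ^ (S n)) ^ 2 * u t) / (c * (2 * INR (S n) + 1))) / lam)).
Definition hpm (s : R) n lam t :=
  t * g t * (u t * u t ^ n) / (INR (S n) * c) + g t ^ 2 * u t ^ n +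
  s * (/ (INR (S n) * c) * / 2 * (lam * (t ^ 2 * g t) + g t * (u t * u t ^ n) ^ 2 / lam)).

Lemma Qpm_deriv s n lam t : 0 < lam -> is_derive (Qpm s n lam) t (hpm s n lam t).
Proof.
  intros Hl. unfold Qpm, W1, hpm.
  assert (HM : 0 < INR (S n)) by (apply lt_0_INR; lia).
  assert (Hc := c_pos).
  set (M := INR (S n)) in *.
  assert (E1 : ex_derive g t) by (eexists; apply g_deriv).
  assert (E2 : ex_derive u t) by (eexists; apply u_deriv).
  assert (E3 : ex_derive G t) by (eexists; apply G_deriv).
  auto_derive.
  - repeat split; assumption.
  - replace (Derive (fun x => g x) t) with (- t * g t) by (symmetry; apply is_derive_unique, g_deriv).
    replace (Derive (fun x => u x) t) with (- c * g t) by (symmetry; apply is_derive_unique, u_deriv).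
    replace (Derive (fun x => G x) t) with (g t) by (symmetry; apply is_derive_unique, G_deriv).
    change (match n with 0%nat => 1 | S _ => INR n + 1 end) with M.
    field. lra.
Qed.

Lemma exp_g t : exp (- t ^ 2) = g t ^ 2.
Proof. unfold g. replace (exp (- t ^ 2 / 2) ^ 2) with (exp (- t ^ 2 / 2) * exp (- t ^ 2 / 2)) by ring. rewrite <- exp_plus. f_equal. field. Qed.

Lemma h_bounds n lam t : 0 < lam ->
  hpm (-1) n lam t <= fI n t <= hpm 1 n lam t.
Proof.
  intros Hl. unfold hpm, fI. rewrite exp_g.
  assert (HM : 0 < INR (S n)) by (apply lt_0_INR; lia).
  assert (Hc := c_pos). assert (Hg := g_pos t).
  set (M := INR (S n)) in *. set (v := u t ^ n) in *. set (U := u t) in *. set (G0 := g t) in *.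
  assert (Hk : 0 < G0 / (2 * M * c * lam)) by (apply Rdiv_lt_0_compat; [lra| repeat apply Rmult_lt_0_compat; lra]).
  split.
  - assert (E : G0 ^ 2 * v - (t * G0 * (U * v) / (M * c) + G0 ^ 2 * v +
      -1 * (/ (M * c) * / 2 * (lam * (t ^ 2 * G0) + G0 * (U * v) ^ 2 / lam))) =
      G0 / (2 * M * c * lam) * (lam * t - U * v) ^ 2) by (field; lra).
    assert (0 <= G0 / (2 * M * c * lam) * (lam * t - U * v) ^ 2) by (apply Rmult_le_pos; [lra| apply pow2_ge_0]).
    lra.
  - assert (E : t * G0 * (U * v) / (M * c) + G0 ^ 2 * v +
      1 * (/ (M * c) * / 2 * (lam * (t ^ 2 * G0) + G0 * (U * v) ^ 2 / lam)) - G0 ^ 2 * v =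
      G0 / (2 * M * c * lam) * (lam * t + U * v) ^ 2) by (field; lra).
    assert (0 <= G0 / (2 * M * c * lam) * (lam * t + U * v) ^ 2) by (apply Rmult_le_pos; [lra| apply pow2_ge_0]).
    lra.
Qed.

Lemma fI_cont n t : continuous (fI n) t.
Proof.
  apply (ex_derive_continuous (K:=R_AbsRing) (V:=R_NormedModule)). unfold fI.
  assert (E2 : ex_derive u t) by (eexists; apply u_deriv).
  auto_derive. repeat split; assumption.
Qed.

Lemma abs_mul_le p x : 0 <= p -> Rabs x <= 1 -> - p <= p * x <= p.
Proof. intros Hp Hx. apply Rabs_le_between in Hx. split; nra. Qed.

Definition Bnd n lam a b :=
  (g a + g b) * / (INR (S n) * c) + / (INR (S n) * c) / 2 * lam * L0 +
  / (INR (S n) * c) * (/ (c * (2 * INR (S n) + 1)) / lam).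

Lemma fin_bound n lam a b : 0 < lam -> a <= 0 -> 0 <= b ->
  Rabs (RInt (fI n) a b) <= Bnd n lam a b.
Proof.
  intros Hl Ha Hb.
  assert (Hab : a <= b) by lra.
  assert (Up : RInt (fI n) a b <= Qpm 1 n lam b - Qpm 1 n lam a).
  { apply (RInt_le_anti _ _ (hpm 1 n lam)); auto.
    - apply fI_cont.
    - intros; apply Qpm_deriv; auto.
    - intros; apply h_bounds; auto. }
  assert (Lo : Qpm (-1) n lam b - Qpm (-1) n lam a <= RInt (fI n) a b).
  { apply (RInt_ge_anti _ _ (hpm (-1) n lam)); auto.
    - apply fI_cont.
    - intros; apply Qpm_deriv; auto.
    - intros; apply h_bounds; auto. }
  assert (HM : 0 < INR (S n)) by (apply lt_0_INR; lia).
  assert (Hc := c_pos).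
  assert (HA : 0 < / (INR (S n) * c)) by (apply Rinv_0_lt_compat, Rmult_lt_0_compat; lra).
  assert (HK : 0 < / (c * (2 * INR (S n) + 1)) / lam).
  { apply Rdiv_lt_0_compat; auto. apply Rinv_0_lt_compat, Rmult_lt_0_compat; lra. }
  unfold Bnd.
  set (M := INR (S n)) in *. set (A := / (M * c)) in *. set (K2 := / (c * (2 * M + 1)) / lam) in *.
  assert (Eq : forall s, Qpm s n lam b - Qpm s n lam a =
     - (A * g b * u b ^ S n) + A * g a * u a ^ S n +
     s * (A / 2 * lam * (W1 b - W1 a) + A / 2 * K2 * ((u a ^ S n) ^ 2 * u a - (u b ^ S n) ^ 2 * u b))).
  { intros s. unfold Qpm, K2, A. fold M. field. lra. }
  rewrite Eq in Up, Lo.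
  assert (HY : W1 b - W1 a <= L0).
  { unfold W1. destruct (G_bound a), (G_bound b).
    assert (0 <= b * g b) by (apply Rmult_le_pos; [lra| apply Rlt_le, g_pos]).
    assert (a * g a <= 0) by (apply Rmult_le_0_r; [lra| apply Rlt_le, g_pos]).
    lra. }
  assert (HY2 : A / 2 * lam * (W1 b - W1 a) <= A / 2 * lam * L0).
  { apply Rmult_le_compat_l; auto. apply Rmult_le_pos; lra. }
  assert (Hua := pow_abs_le1 _ (S n) (u_abs a)).
  assert (Hub := pow_abs_le1 _ (S n) (u_abs b)).
  assert (HZa : Rabs ((u a ^ S n) ^ 2 * u a) <= 1).
  { rewrite Rabs_mult, <- RPow_abs. assert (H := u_abs a).
    assert (0 <= Rabs (u a ^ S n)) by apply Rabs_pos.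
    assert (0 <= Rabs (u a)) by apply Rabs_pos.
    assert (Rabs (u a ^ S n) ^ 2 <= 1) by nra. nra. }
  assert (HZb : Rabs ((u b ^ S n) ^ 2 * u b) <= 1).
  { rewrite Rabs_mult, <- RPow_abs. assert (H := u_abs b).
    assert (0 <= Rabs (u b ^ S n)) by apply Rabs_pos.
    assert (0 <= Rabs (u b)) by apply Rabs_pos.
    assert (Rabs (u b ^ S n) ^ 2 <= 1) by nra. nra. }
  assert (P1 := abs_mul_le (A * g b) _ (Rlt_le _ _ (Rmult_lt_0_compat _ _ HA (g_pos b))) Hub).
  assert (P2 := abs_mul_le (A * g a) _ (Rlt_le _ _ (Rmult_lt_0_compat _ _ HA (g_pos a))) Hua).
  assert (P3 := abs_mul_le (A / 2 * K2) _ ltac:(apply Rmult_le_pos; lra) HZa).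
  assert (P4 := abs_mul_le (A / 2 * K2) _ ltac:(apply Rmult_le_pos; lra) HZb).
  apply Rabs_le. split.
  - nra.
  - nra.
Qed.

Lemma g_le1 t : g t <= 1.
Proof.
  eapply Rle_trans; [apply g_le|]. assert (0 <= t ^ 2) by apply pow2_ge_0.
  rewrite <- Rinv_1. apply Rinv_le_contravar; lra.
Qed.

Lemma exp2_cont t : continuous (fun x => exp (- x ^ 2)) t.
Proof. apply (ex_derive_continuous (K:=R_AbsRing) (V:=R_NormedModule)). auto_derive. auto. Qed.

Lemma fI_abs n t : Rabs (fI n t) <= exp (- t ^ 2).
Proof.
  unfold fI. rewrite Rabs_mult, (Rabs_right (exp _)) by (apply Rle_ge, Rlt_le, exp_pos).
  assert (H := pow_abs_le1 _ n (u_abs t)). assert (H2 := exp_pos (- t ^ 2)).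
  assert (0 <= Rabs (u t ^ n)) by apply Rabs_pos. nra.
Qed.

Lemma exp2_le_g t : exp (- t ^ 2) <= g t.
Proof. rewrite exp_g. assert (H := g_le1 t). assert (H2 := g_pos t). simpl. nra. Qed.

Lemma RInt_2g a b : RInt (fun x => 2 * g x) a b = 2 * RInt g a b.
Proof. apply (RInt_scal (V:=R_CompleteNormedModule)). apply exRI, g_cont. Qed.

Lemma fI_ex n : exists l, is_RInt_gen (fI n) (Rbar_locally m_infty) (Rbar_locally p_infty) l.
Proof.
  destruct (ex_gen2 (fun x => fI n x + exp (- x ^ 2)) (2 * L0)) as [l1 H1].
  - intros x. apply (continuous_plus (fI n)); [apply fI_cont | apply exp2_cont].
  - intros x. assert (H := fI_abs n x). apply Rabs_le_between in H. lra.
  - intros a b Hab. eapply Rle_trans.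
    + apply (RInt_le _ (fun x => 2 * g x)); auto.
      * apply exRI. intros x. apply (continuous_plus (fI n)); [apply fI_cont | apply exp2_cont].
      * apply exRI. intros x. apply (continuous_scal_r 2 g). apply g_cont.
      * intros x _. assert (H := fI_abs n x). apply Rabs_le_between in H.
        assert (H2 := exp2_le_g x). lra.
    + rewrite RInt_2g. assert (H := RInt_g_le a b Hab). lra.
  - destruct (ex_gen2 (fun x => exp (- x ^ 2)) L0) as [l2 H2].
    + apply exp2_cont.
    + intros x. apply Rlt_le, exp_pos.
    + intros a b Hab. eapply Rle_trans; [apply (RInt_le _ g); auto|].
      * apply exRI, exp2_cont.
      * apply exRI, g_cont.
      * intros x _; apply exp2_le_g.
      * apply RInt_g_le; auto.
    + exists (minus l1 l2).
      assert (H := is_RInt_gen_minus _ _ _ _ H1 H2).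
      eapply is_RInt_gen_ext; [| exact H].
      apply (Filter_prod _ _ _ (fun _ => True) (fun _ => True)).
      * exists 0; auto.
      * exists 0; auto.
      * intros; unfold minus, plus, opp; simpl; ring.
Qed.

Lemma num_ineq : 1 + sqrt 2 * PI / 2 + sqrt 2 * sqrt PI <= 2 * PI.
Proof.
  destruct sqrtPI_facts as [H1 [H2 [H3 H4]]]. destruct sqrt2_facts as [H5 H6].
  set (x := sqrt PI) in *. set (s := sqrt 2) in *.
  assert (Hs : s <= 1.415) by nra.
  assert (Hx : 1.732 <= x) by nra.
  rewrite <- H1. nra.
Qed.

Lemma g_small S t : 1 <= S -> 2 * S <= Rabs t -> g t <= / (2 * S).
Proof.
  intros HS Ht. eapply Rle_trans; [apply g_le|].
  assert (t ^ 2 = Rabs t * Rabs t) by (rewrite <- Rabs_mult; simpl; rewrite Rmult_1_r, Rabs_right; [ring| apply Rle_ge, Rle_0_sqr]).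
  apply Rinv_le_contravar; nra.
Qed.

Lemma P_bound n : Rabs (P (S n)) <= 2 * PI * sqrt 2 / sqrt (2 * INR (S n) + 1).
Proof.
  destruct (fI_ex n) as [l Hl].
  assert (HP : P (S n) = INR (S n) / sqrt PI * l).
  { unfold P. replace (S n - 1)%nat with n by lia.
    change (fun t => exp (- t ^ 2) * (1 - Phi t) ^ n) with (fI n).
    rewrite (is_RInt_gen_unique _ _ Hl). reflexivity. }
  rewrite HP.
  assert (HM : 1 <= INR (S n)) by (apply (le_INR 1); lia).
  assert (Hc := c_pos).
  set (M := INR (S n)) in *.
  assert (HS2 : sqrt (2 * M + 1) * sqrt (2 * M + 1) = 2 * M + 1) by (apply sqrt_sqrt; lra).
  assert (HS1 : 1 <= sqrt (2 * M + 1)).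
  { assert (H := sqrt_le_1_alt 1 (2 * M + 1) ltac:(lra)). rewrite sqrt_1 in H. exact H. }
  set (Sq := sqrt (2 * M + 1)) in *.
  set (lam := / Sq).
  assert (Hlam : 0 < lam) by (apply Rinv_0_lt_compat; lra).
  set (A := / (M * c)).
  assert (HA : 0 < A) by (apply Rinv_0_lt_compat, Rmult_lt_0_compat; lra).
  set (K := 2 * / (2 * Sq) * A + A / 2 * lam * L0 + A * (/ (c * (2 * M + 1)) / lam)).
  assert (Hb : - K <= l <= K).
  { apply (is_RInt_gen_bound (fI n) (Rbar_locally m_infty) (Rbar_locally p_infty)); try exact _; auto.
    apply (Filter_prod _ _ _ (fun a => a < - (2 * Sq)) (fun b => 2 * Sq < b)).
    - exists (- (2 * Sq)); auto.
    - exists (2 * Sq); auto.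
    - intros a b Ha Hb y Hy. simpl in Hy.
      rewrite <- (is_RInt_unique _ _ _ _ Hy).
      assert (Hf := fin_bound n lam a b Hlam ltac:(lra) ltac:(lra)).
      assert (Hga : g a <= / (2 * Sq)) by (apply g_small; auto; rewrite Rabs_left; lra).
      assert (Hgb : g b <= / (2 * Sq)) by (apply g_small; auto; rewrite Rabs_right; lra).
      unfold Bnd in Hf. fold M in Hf. fold A in Hf.
      assert ((g a + g b) * A <= 2 * / (2 * Sq) * A) by (apply Rmult_le_compat_r; lra).
      apply Rabs_le_between. unfold K. lra. }
  assert (HK : M / sqrt PI * K = sqrt 2 * (1 + sqrt 2 * PI / 2 + sqrt 2 * sqrt PI) / Sq).
  { unfold K, A, lam, L0. rewrite c_eq. rewrite <- HS2.
    destruct sqrtPI_facts as [H1 [H2 [H3 H4]]]. destruct sqrt2_facts as [H5 H6].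
    field. repeat split; lra. }
  assert (Hpos : 0 <= M / sqrt PI).
  { destruct sqrtPI_facts as [H1 [H2 [H3 H4]]]. apply Rlt_le, Rdiv_lt_0_compat; lra. }
  rewrite Rabs_mult, (Rabs_right (M / sqrt PI)) by lra.
  eapply Rle_trans.
  - apply Rmult_le_compat_l; [exact Hpos|]. apply Rabs_le_between in Hb. exact Hb.
  - rewrite HK. unfold Rdiv. apply Rmult_le_compat_r; [apply Rlt_le, Rinv_0_lt_compat; lra|].
    assert (H := num_ineq). destruct sqrt2_facts. nra.
Qed.

Theorem mainTheorem5 :
  (forall m : nat, (2 <= m)%nat ->
     P m <= 2 * PI * sqrt 2 / sqrt (2 * INR m + 1))
  /\ is_lim_seq P 0.
Proof.
  split.
  - intros m Hm. destruct m as [|n]; [lia|].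
    eapply Rle_trans; [apply Rle_abs| apply P_bound].
  - apply is_lim_seq_spec. intros eps.
    set (C := 2 * PI * sqrt 2).
    assert (HC : 0 < C).
    { unfold C. destruct sqrt2_facts. assert (HPI := PI_RGT_0). nra. }
    assert (He := cond_pos eps).
    destruct (nfloor_ex ((C / eps) ^ 2) (pow2_ge_0 _)) as [N [HN1 HN2]].
    exists (S N). intros k Hk. destruct k as [|n]; [lia|].
    rewrite Rminus_0_r. eapply Rle_lt_trans; [apply P_bound|].
    fold C.
    assert (HkN : INR N + 1 <= INR (S n)) by (rewrite <- S_INR; apply le_INR; lia).
    assert (H0 : 0 <= INR (S n)) by apply pos_INR.
    assert (Hs : C / eps < sqrt (2 * INR (S n) + 1)).
    { rewrite <- (sqrt_pow2 (C / eps)) by (apply Rlt_le, Rdiv_lt_0_compat; lra).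
      apply sqrt_lt_1_alt. split; [apply pow2_ge_0| lra]. }
    assert (Hq : 0 < C / eps) by (apply Rdiv_lt_0_compat; lra).
    apply (Rmult_lt_reg_r (sqrt (2 * INR (S n) + 1))); [lra|].
    unfold Rdiv. rewrite Rmult_assoc, Rinv_l by lra. rewrite Rmult_1_r.
    unfold Rdiv in Hs. apply (Rmult_lt_compat_l eps) in Hs; auto.
    rewrite <- Rmult_assoc, (Rmult_comm eps C), Rmult_assoc, Rinv_r, Rmult_1_r in Hs by lra.
    lra.
Qed.
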